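(* Assume $\delta=0$, $k>2$, and that a fraction $b\in(0,1)$ of firms receive patents (no link costs). Then along any sequence of symmetric investment equilibria, $$\lim_{n\to\infty}q^*(0)\,n^{1/k}=\left(\frac{k-1}{b}\right)^{1/k}.$$
   Context: Model (for each number of firms $n\ge 2$). There are $n$ firms $1,\dots,n$; firm $i$ can discover a single idea, also labelled $i$. Fixed parameters: an integer complexity $k\ge 2$, $\delta\in[0,1]$, and a cost function $c:[0,1)\to[0,\infty)$ that is continuously differentiable, increasing and convex with $c(0)=0$ and $c(p)\to\infty$ as $p\to1^-$. A set of $bn$ firms are patented (exogenously); patent status is known. Each firm chooses an investment $p_i\in[0,1)$ and an openness in $[0,1]$; $q_i(1)$ denotes the openness chosen if $i$ has a patent and $q_i(0)$ if not. Idea $i$ is discovered independently with probability $p_i$; $I$ is the set of discovered ideas. With $q_i$ the openness actually used by $i$, the interaction rate is $\iota(q_i,q_j)=q_iq_j$. For each ordered pair $i\neq j$, independently, $i$ learns directly from $j$ with probability $\iota(q_i,q_j)$, and conditional on this, independently with probability $\delta$, $i$ also learns indirectly through $j$; with $\delta=0$, $I_i$ is the set of discovered ideas $j\neq i$ such that $i$ learns directly from $j$. A technology is a $k$-element $t\subseteq I$; firm $j$ knows $t$ if $t\subseteq\{j\}\cup I_j$. Firm $i$ receives $1$ for each technology $t$ such that $i\in t$, $i$ knows $t$, no idea $j\in t$ with $j\neq i$ is patented, and either $i$ is patented or $i$ is the unique firm knowing $t$; payoff is the expected count minus $c(p_i)$. An equilibrium is a pure-strategy Nash equilibrium; an investment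 equilibrium has all $p_i>0$; it is symmetric if all patented firms choose the same action $(p^*(1),q^*(1))$ and all unpatented firms the same action $(p^*(0),q^*(0))$. Sequences are indexed by $n\to\infty$. *)

(* Defs.v *)
From Stdlib Require Import Reals.
From mathcomp Require Import all_boot.

Set Implicit Arguments.
Unset Strict Implicit.
Unset Printing Implicit Defensive.
Open Scope R_scope.

Definition Rsum (I : finType) (F : I -> R) : R :=
  \big[Rplus/R0]_(i : I) F i.
Definition Rprod (I : finType) (F : I -> R) : R :=
  \big[Rmult/R1]_(i : I) F i.

Definition cost_function (c : R -> R) : Prop :=
  (forall p, (0 <= p < 1) -> (0 <= c p)) /\
  c 0 = 0 /\
  (forall x y, (0 <= x) -> (x < y) -> (y < 1) -> (c x < c y)) /\
  (forall x y l, (0 <= x < 1) -> (0 <= y < 1) -> (0 <= l <= 1) ->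
     (c (l * x + (1 - l) * y) <= l * c x + (1 - l) * c y)) /\
  (exists c' : R -> R,
     (forall p, (0 < p < 1) -> derivable_pt_lim c p (c' p)) /\
     (forall eps, (0 < eps) -> exists del, (0 < del) /\
        forall h, (0 < h < del) -> (Rabs ((c h - c 0) / h - c' 0) < eps)) /\
     (forall p, (0 <= p < 1) -> forall eps, (0 < eps) ->
        exists del, (0 < del) /\ forall x, (0 <= x < 1) -> (Rabs (x - p) < del) ->
          (Rabs (c' x - c' p) < eps))) /\
  (forall M, exists eta, (0 < eta) /\
     forall p, (1 - eta < p) -> (p < 1) -> (M < c p)).

(* The random outcome: D = set I of discovered ideas, L = set of ordered *)
(* pairs (i,j) such that i learns directly from j.  Since delta = 0 there *)
(* is no indirect learning.                                               *)

(* probability of outcome (D, L) under investments p and (used) openness q;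
   diagonal pairs (i,i) never belong to L (weight 0 otherwise). *)
Definition outcome_weight (n : nat) (p q : 'I_n -> R)
    (D : {set 'I_n}) (L : {set 'I_n * 'I_n}) : R :=
  (Rprod (fun i : 'I_n => if i \in D then p i else 1 - p i) *
   Rprod (fun x : 'I_n * 'I_n =>
            if x.1 == x.2 then (if x \in L then 0 else 1)
            else if x \in L then q x.1 * q x.2 else 1 - q x.1 * q x.2)).

Definition learned (n : nat) (D : {set 'I_n}) (L : {set 'I_n * 'I_n})
    (i : 'I_n) : {set 'I_n} :=
  [set j in D | (j != i) && ((i, j) \in L)].

Definition knows (n : nat) (D : {set 'I_n}) (L : {set 'I_n * 'I_n})
    (j : 'I_n) (t : {set 'I_n}) : bool :=
  t \subset (j |: learned D L j).

Definition rewarded (k n : nat) (pat : 'I_n -> bool) (D : {set 'I_n})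
    (L : {set 'I_n * 'I_n}) (i : 'I_n) (t : {set 'I_n}) : bool :=
  [&& #|t| == k, t \subset D, i \in t, knows D L i t,
      [forall j in t, (j != i) ==> ~~ pat j] &
      pat i || [forall j, knows D L j t ==> (j == i)]].

Definition reward_count (k n : nat) (pat : 'I_n -> bool) (D : {set 'I_n})
    (L : {set 'I_n * 'I_n}) (i : 'I_n) : nat :=
  #|[set t : {set 'I_n} | rewarded k pat D L i t]|.

Definition payoff (k n : nat) (c : R -> R) (pat : 'I_n -> bool)
    (p q : 'I_n -> R) (i : 'I_n) : R :=
  (Rsum (fun o : {set 'I_n} * {set 'I_n * 'I_n} =>
           outcome_weight p q o.1 o.2 * INR (reward_count k pat o.1 o.2 i))
   - c (p i)).

Definition admissible (p q : R) : Prop := (0 <= p < 1) /\ (0 <= q <= 1).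

Definition update (n : nat) (f : 'I_n -> R) (i : 'I_n) (x : R) : 'I_n -> R :=
  fun j => if j == i then x else f j.

(* pure-strategy Nash equilibrium; p i and q i are the investment and the
   openness actually used by firm i (i.e. q_i(patent status of i)) *)
Definition nash_eq (k n : nat) (c : R -> R) (pat : 'I_n -> bool)
    (p q : 'I_n -> R) : Prop :=
  (forall i, admissible (p i) (q i)) /\
  forall i p' q', admissible p' q' ->
    (payoff k c pat (update p i p') (update q i q') i <= payoff k c pat p q i).

Definition sym_investment_eq (k n : nat) (c : R -> R) (pat : 'I_n -> bool)
    (p1 q1 p0 q0 : R) : Prop :=
  (forall i, (0 < (if pat i then p1 else p0))) /\
  nash_eq k c pat (fun i => if pat i then p1 else p0)
                  (fun i => if pat i then q1 else q0).

(* Main.v *)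
Require Import Defs.
From Stdlib Require Import Reals Lra FunctionalExtensionality.
From Coquelicot Require Import Coquelicot.
From HB Require Import structures.
From mathcomp Require Import all_boot.
Set Warnings "-notation-overridden,-redundant-canonical-projection,-ambiguous-paths".
Set Implicit Arguments. Unset Strict Implicit. Unset Printing Implicit Defensive.
Open Scope R_scope.


HB.instance Definition _ := Monoid.isComLaw.Build R 0 Rplus
  (fun a b c => esym (Rplus_assoc a b c)) Rplus_comm Rplus_0_l.
HB.instance Definition _ := Monoid.isComLaw.Build R 1 Rmult
  (fun a b c => esym (Rmult_assoc a b c)) Rmult_comm Rmult_1_l.
HB.instance Definition _ := Monoid.isMulLaw.Build R 0 Rmult Rmult_0_l Rmult_0_r.
HB.instance Definition _ := Monoid.isAddLaw.Build R Rmult Rplus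
  Rmult_plus_distr_r Rmult_plus_distr_l.

Lemma sum_set_prod (X : finType) (G : X -> bool -> R) :
  Rsum (fun S : {set X} => Rprod (fun x => G x (x \in S))) =
  Rprod (fun x => G x true + G x false).
Proof.
have -> : Rprod (fun x => G x true + G x false) =
   \big[Rmult/1]_(x : X) \big[Rplus/0]_(b : bool) G x b.
  by apply: eq_bigr => x _; rewrite big_bool /= Rplus_comm.
rewrite /Rsum /Rprod bigA_distr_bigA /=.
rewrite (reindex (fun S : {set X} => [ffun x => x \in S])) /=.
  by apply: eq_bigr => S _; apply: eq_bigr => x _; rewrite ffunE.
exists (fun f : {ffun X -> bool} => [set x | f x]) => [S _|f _].
  by apply/setP => x; rewrite inE ffunE.
by apply/ffunP => x; rewrite ffunE inE.
Qed.

Definition bern (a : R) (b : bool) : R := if b then a else 1 - a.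
Definition wgt (X : finType) (a : X -> R) (S : {set X}) : R :=
  Rprod (fun x => bern (a x) (x \in S)).

Lemma Rprod_mul (I : finType) (F G : I -> R) :
  Rprod F * Rprod G = Rprod (fun i => F i * G i).
Proof. by rewrite /Rprod big_split. Qed.

Lemma E_prod (X : finType) (a : X -> R) (g : X -> bool -> R) :
  Rsum (fun S : {set X} => wgt a S * Rprod (fun x => g x (x \in S))) =
  Rprod (fun x => a x * g x true + (1 - a x) * g x false).
Proof.
rewrite -(sum_set_prod (fun x b => bern (a x) b * g x b)).
by apply: eq_bigr => S _; rewrite /wgt Rprod_mul.
Qed.

Lemma Rprod1 (I : finType) : Rprod (fun _ : I => 1) = 1.
Proof. by rewrite /Rprod big1. Qed.

Lemma E_one (X : finType) (a : X -> R) :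
  Rsum (fun S : {set X} => wgt a S) = 1.
Proof.
transitivity (Rsum (fun S : {set X} => wgt a S * Rprod (fun x => (fun _ _ => 1) x (x \in S)))).
  by apply: eq_bigr => S _; rewrite Rprod1 Rmult_1_r.
rewrite (E_prod a (fun _ _ => 1)) /Rprod big1 // => x _; lra.
Qed.

Lemma E_subset (X : finType) (a : X -> R) (A : {set X}) :
  Rsum (fun S : {set X} => wgt a S * (if A \subset S then 1 else 0)) =
  Rprod (fun x => if x \in A then a x else 1).
Proof.
have := E_prod a (fun x b => if x \in A then (if b then 1 else 0) else 1).
have -> : Rprod (fun x => a x * (if x \in A then 1 else 1) +
   (1 - a x) * (if x \in A then 0 else 1)) = Rprod (fun x => if x \in A then a x else 1).
  by apply: eq_bigr => x _; case: (x \in A); lra.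
move=> <-; apply: eq_bigr => S _; congr (_ * _).
case: (boolP (A \subset S)) => hA.
  rewrite /Rprod big1 // => x _; case: ifP => // xA.
  by rewrite (subsetP hA x xA).
case/subsetPn: hA => x xA xS.
rewrite /Rprod (bigD1 x) //= xA (negbTE xS) /=; lra.
Qed.

Definition row (I : finType) (L : {set I * I}) (j : I) : {set I} :=
  [set m | (j, m) \in L].

Lemma E_rows (I : finType) (a : I * I -> R) (H : I -> {set I} -> R) :
  Rsum (fun L : {set I * I} => wgt a L * Rprod (fun j => H j (row L j))) =
  Rprod (fun j => Rsum (fun s : {set I} => wgt (fun m => a (j, m)) s * H j s)).
Proof.
rewrite /Rsum /Rprod bigA_distr_bigA /=.
rewrite (reindex (fun f : {ffun I -> {set I}} => [set x | x.2 \in f x.1])) /=.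
  apply: eq_bigr => f _.
  have hr : forall j, row [set x | x.2 \in f x.1] j = f j.
    by move=> j; apply/setP => m; rewrite !inE.
  rewrite /wgt /Rprod.
  have -> : \big[Rmult/1]_(x : I * I) bern (a x) (x \in [set x | x.2 \in f x.1]) =
     \big[Rmult/1]_(j : I) \big[Rmult/1]_(m : I) bern (a (j, m)) (m \in f j).
    by rewrite pair_big /=; apply: eq_bigr => [[j m]] _; rewrite inE.
  rewrite -big_split /=; apply: eq_bigr => j _; by rewrite hr.
exists (fun L : {set I * I} => [ffun j => row L j]) => [f _|L _].
  by apply/ffunP => j; rewrite ffunE; apply/setP => m; rewrite !inE.
by apply/setP => [[j m]]; rewrite !inE ffunE inE.
Qed.


Definition aL (n : nat) (q : 'I_n -> R) (x : 'I_n * 'I_n) : R :=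
  if x.1 == x.2 then 0 else q x.1 * q x.2.
Definition sprod (I : finType) (A : {set I}) (f : I -> R) : R :=
  Rprod (fun x => if x \in A then f x else 1).

Lemma weight_split n (p q : 'I_n -> R) D L :
  outcome_weight p q D L = wgt p D * wgt (aL q) L.
Proof.
rewrite /outcome_weight /wgt; congr (_ * _); apply: eq_bigr => x _.
by rewrite /aL /bern; case: (x.1 == x.2); case: (x \in L) => //; lra.
Qed.

Lemma Rprod_ind (I : finType) (b : I -> bool) :
  Rprod (fun j => if b j then 1 else 0) = if [forall j, b j] then 1 else 0.
Proof.
case: forallP => h.
  by rewrite /Rprod big1 // => j _; rewrite h.
have [j hj] : exists j, ~~ b j.
  by apply/existsP; rewrite -negb_forall; apply/forallP.
rewrite /Rprod (bigD1 j) //= (negbTE hj); lra.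
Qed.

Lemma knowsE n (D : {set 'I_n}) (L : {set 'I_n * 'I_n}) (j : 'I_n) (t : {set 'I_n}) :
  t \subset D -> knows D L j t = (t :\ j \subset row L j).
Proof.
move=> tD; rewrite /knows; apply/subsetP/subsetP => h m.
  rewrite !inE =>  /andP [mj mt]; move: (h m mt); rewrite !inE (negbTE mj) /=.
  by move=> /andP [_ ->].
move=> mt; rewrite !inE; case: (eqVneq m j) => //= mj.
have := h m; rewrite !inE mj mt => /(_ isT) ->.
by rewrite (subsetP tD m mt).
Qed.

Definition valid (k n : nat) (pat : 'I_n -> bool) (i : 'I_n) (t : {set 'I_n}) : bool :=
  [&& #|t| == k, i \in t & [forall j in t, (j != i) ==> ~~ pat j]].

Definition Hrow (n : nat) (pat : 'I_n -> bool) (i : 'I_n) (t : {set 'I_n})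
  (j : 'I_n) (s : {set 'I_n}) : R :=
  if (if j == i then t :\ j \subset s else pat i || ~~ (t :\ j \subset s)) then 1 else 0.

Lemma bool_aux (I : finType) (i : I) (pi : bool) (K : I -> bool) :
  K i && (pi || [forall j, K j ==> (j == i)]) =
  [forall j, if j == i then K j else pi || ~~ K j].
Proof.
apply/idP/forallP.
  case/andP => hi h j; case: eqP => [->|/eqP ji] //.
  case/orP: h => [->//|/forallP /(_ j)].
  by rewrite (negbTE ji) implybF => ->; rewrite orbT.
move=> h; move: (h i); rewrite eqxx => -> /=.
case: pi h => //= h; apply/forallP => j; apply/implyP => hj.
by move: (h j); case: eqP => // _; rewrite hj.
Qed.

Lemma ind_split k n (pat : 'I_n -> bool) (D : {set 'I_n}) (L : {set 'I_n * 'I_n}) (i : 'I_n) (t : {set 'I_n}) :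
  (if rewarded k pat D L i t then 1 else 0) =
  (if valid k pat i t then 1 else 0) * (if t \subset D then 1 else 0) *
  Rprod (fun j => Hrow pat i t j (row L j)).
Proof.
rewrite /Hrow Rprod_ind /rewarded /valid.
case: (#|t| == k) => /=; last by rewrite !Rmult_0_l.
case: (i \in t) => /=; rewrite ?andbF /=; last by rewrite !Rmult_0_l.
case: ([forall j in t, (j != i) ==> ~~ pat j]) => /=; rewrite ?andbF /=; last by rewrite !Rmult_0_l.
case: (boolP (t \subset D)) => tD /=; last by rewrite Rmult_1_l !Rmult_0_l.
rewrite !knowsE //.
have -> : [forall j, knows D L j t ==> (j==i)] = [forall j, (t:\j \subset row L j) ==> (j==i)].
  by apply: eq_forallb => j; rewrite knowsE.
have := bool_aux i (pat i) (fun j => t :\ j \subset row L j) => /= ->.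
by rewrite !Rmult_1_l.
Qed.

Definition Erow (n : nat) (pat : 'I_n -> bool) (q : 'I_n -> R) (i : 'I_n)
  (t : {set 'I_n}) (j : 'I_n) : R :=
  if j == i then sprod (t :\ i) (fun m => q i * q m)
  else if pat i then 1 else 1 - sprod (t :\ j) (fun m => q j * q m).

Lemma sprod_aL n (q : 'I_n -> R) (j : 'I_n) (A : {set 'I_n}) :
  Rprod (fun m => if m \in A :\ j then aL q (j, m) else 1) =
  sprod (A :\ j) (fun m => q j * q m).
Proof.
apply: eq_bigr => m _; case: (boolP (m \in A :\ j)) => //.
by rewrite !inE /aL /= eq_sym => /andP [/negbTE ->].
Qed.

Lemma Rsum_distr (I : finType) (c : R) (F : I -> R) :
  Rsum (fun x => c * F x) = c * Rsum F.
Proof. by rewrite /Rsum big_distrr. Qed.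

Lemma Rsum_sub (I : finType) (F G : I -> R) :
  Rsum (fun x => F x - G x) = Rsum F - Rsum G.
Proof.
rewrite /Rsum; unfold Rminus.
rewrite big_split /=; congr (_ + _).
symmetry; apply: (big_morph Ropp); [by move=> *; lra|lra].
Qed.

Lemma row_E n (pat : 'I_n -> bool) (q : 'I_n -> R) (i : 'I_n) (t : {set 'I_n}) (j : 'I_n) :
  Rsum (fun s : {set 'I_n} => wgt (fun m => aL q (j, m)) s * Hrow pat i t j s) =
  Erow pat q i t j.
Proof.
rewrite /Hrow /Erow; case: eqP => [->|ji].
  by rewrite E_subset sprod_aL.
case: (pat i) => /=.
  by rewrite -[RHS](E_one (fun m => aL q (j, m))); apply: eq_bigr => s _; rewrite Rmult_1_r.
rewrite -sprod_aL -E_subset -[X in X - _](E_one (fun m => aL q (j, m))) -Rsum_sub.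
apply: eq_bigr => s _; case: (t :\ j \subset s) => /=; rewrite ?Rmult_0_r ?Rmult_1_r; unfold Rminus; rewrite ?Ropp_0 ?Rplus_0_r ?Rplus_opp_r //.
Qed.

Lemma mulr3_perm (a b c d e : R) : a * b * (c * d * e) = c * (a * d) * (b * e).
Proof. ring. Qed.

Lemma per_t k n (pat : 'I_n -> bool) (p q : 'I_n -> R) (i : 'I_n) (t : {set 'I_n}) :
  Rsum (fun o : {set 'I_n} * {set 'I_n * 'I_n} =>
     outcome_weight p q o.1 o.2 * (if rewarded k pat o.1 o.2 i t then 1 else 0)) =
  (if valid k pat i t then 1 else 0) * sprod t p * Rprod (Erow pat q i t).
Proof.
transitivity (\big[Rplus/0]_(D : {set 'I_n}) \big[Rplus/0]_(L : {set 'I_n * 'I_n})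
   ((if valid k pat i t then 1 else 0) * (wgt p D * (if t \subset D then 1 else 0)) *
    (wgt (aL q) L * Rprod (fun j => Hrow pat i t j (row L j))))).
  rewrite pair_big /=; apply: eq_bigr => [[D L]] _ /=.
  rewrite weight_split ind_split.
  by apply: mulr3_perm.
transitivity (\big[Rplus/0]_(D : {set 'I_n})
   ((if valid k pat i t then 1 else 0) * (wgt p D * (if t \subset D then 1 else 0)) *
    Rsum (fun L : {set 'I_n * 'I_n} => wgt (aL q) L * Rprod (fun j => Hrow pat i t j (row L j))))).
  by apply: eq_bigr => D _; rewrite -Rsum_distr.
rewrite E_rows.
transitivity ((if valid k pat i t then 1 else 0) *
   Rsum (fun D : {set 'I_n} => wgt p D * (if t \subset D then 1 else 0)) *
   Rprod (fun j => Rsum (fun s : {set 'I_n} => wgt (fun m => aL q (j, m)) s * Hrow pat i t j s))).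
  rewrite /Rsum big_distrr big_distrl /=; apply: eq_bigr => D _.
  by [].
rewrite E_subset; congr (_ * _ * _).
by apply: eq_bigr => j _; rewrite row_E.
Qed.

Lemma INR_card (I : finType) (P : pred I) :
  INR #|[set x | P x]| = Rsum (fun x => if P x then 1 else 0).
Proof.
rewrite -sum1_card big_mkcond /Rsum.
rewrite (big_morph INR plus_INR (erefl (INR 0))).
by apply: eq_bigr => x _; rewrite inE; case: (P x).
Qed.

Lemma exp_count k n (pat : 'I_n -> bool) (p q : 'I_n -> R) (i : 'I_n) :
  Rsum (fun o : {set 'I_n} * {set 'I_n * 'I_n} =>
     outcome_weight p q o.1 o.2 * INR (reward_count k pat o.1 o.2 i)) =
  Rsum (fun t : {set 'I_n} =>
     (if valid k pat i t then 1 else 0) * sprod t p * Rprod (Erow pat q i t)).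
Proof.
rewrite /reward_count.
transitivity (Rsum (fun o : {set 'I_n} * {set 'I_n * 'I_n} =>
   Rsum (fun t : {set 'I_n} => outcome_weight p q o.1 o.2 *
      (if rewarded k pat o.1 o.2 i t then 1 else 0)))).
  by apply: eq_bigr => o _; rewrite INR_card /Rsum big_distrr.
rewrite /Rsum exchange_big /=; apply: eq_bigr => t _.
exact: per_t.
Qed.


Lemma iter_Rmult (c : R) m : iter m (Rmult c) 1 = c ^ m.
Proof. by elim: m => //= m ->. Qed.

Lemma sprod_const (I : finType) (A : {set I}) (f : I -> R) (c : R) :
  (forall x, x \in A -> f x = c) -> sprod A f = c ^ #|A|.
Proof.
move=> h; rewrite /sprod /Rprod -big_mkcond /=.
rewrite (eq_bigr (fun _ => c)) //; by rewrite big_const iter_Rmult.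
Qed.

Lemma sprod_split (I : finType) (A : {set I}) (f : I -> R) (x : I) :
  x \in A -> sprod A f = f x * sprod (A :\ x) f.
Proof.
move=> xA; rewrite /sprod /Rprod (bigD1 x) //= xA; congr (_ * _).
rewrite [RHS](bigD1 x) //= !inE eqxx /= Rmult_1_l.
by apply: eq_bigr => m mx; rewrite !inE mx.
Qed.

Lemma Rprod_if_eq (I : finType) (i : I) (X : R) :
  Rprod (fun j => if j == i then X else 1) = X.
Proof.
rewrite /Rprod (bigD1 i) //= eqxx big1 ?Rmult_1_r // => j /negbTE -> //.
Qed.

Lemma Rprod_set (I : finType) (A : {set I}) (c : R) :
  Rprod (fun j => if j \in A then c else 1) = c ^ #|A|.
Proof. exact: (sprod_const (f := fun _ => c)). Qed.

Definition prof n (pat : 'I_n -> bool) (a1 a0 : R) : 'I_n -> R :=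
  fun j => if pat j then a1 else a0.

Lemma update_same n (pat : 'I_n -> bool) a1 a0 i :
  update (prof pat a1 a0) i (prof pat a1 a0 i) = prof pat a1 a0.
Proof.
apply: functional_extensionality => j; rewrite /update; case: eqP => // ->//.
Qed.

Lemma Rsum_valid (I : finType) (P : pred I) (F : I -> R) (V : R) :
  (forall x, P x -> F x = V) ->
  Rsum (fun x => (if P x then 1 else 0) * F x) = INR #|[set x | P x]| * V.
Proof.
move=> h; rewrite INR_card /Rsum big_distrl /=; apply: eq_bigr => x _.
case: (boolP (P x)) => px; last lra.
by rewrite h //; lra.
Qed.

Lemma Rsum_valid2 (I : finType) (P : pred I) (F G : I -> R) (V : R) :
  (forall x, P x -> F x * G x = V) ->
  Rsum (fun x => (if P x then 1 else 0) * F x * G x) = INR #|[set x | P x]| * V.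
Proof.
move=> h; rewrite -(Rsum_valid (F := fun x => F x * G x)) //.
by apply: eq_bigr => x _; rewrite Rmult_assoc.
Qed.

Section Sym.
Variables (k n : nat) (pat : 'I_n -> bool) (p1 q1 p0 q0 : R) (i : 'I_n).

Let pp := fun p' => update (prof pat p1 p0) i p'.
Let qq := fun q' => update (prof pat q1 q0) i q'.

Lemma valid_facts t : valid k pat i t ->
  [/\ #|t| = k, i \in t & forall j, j \in t -> j != i -> pat j = false].
Proof.
case/and3P => /eqP -> it /forallP h; split => // j jt ji.
by move: (h j); rewrite jt ji /= => /negbTE.
Qed.

Lemma card_rm (t : {set 'I_n}) j : j \in t -> #|t :\ j| = (#|t| - 1)%N.
Proof. by move=> jt; rewrite (cardsD1 j t) jt add1n subn1. Qed.

Lemma sprod_t_p t p' : pat i = false -> valid k pat i t ->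
  sprod t (pp p') = p' * p0 ^ (k - 1).
Proof.
move=> pi /valid_facts [ct it ht].
rewrite (sprod_split _ it) /pp /update eqxx; congr (_ * _).
rewrite -ct -(@card_rm t i it); apply: sprod_const => x; rewrite !inE => /andP [xi xt].
by rewrite (negbTE xi) /prof ht.
Qed.

Lemma sprod_t_p_pat t p' : pat i = true -> valid k pat i t ->
  sprod t (pp p') = p' * p0 ^ (k - 1).
Proof.
move=> pi /valid_facts [ct it ht].
rewrite (sprod_split _ it) /pp /update eqxx; congr (_ * _).
rewrite -ct -(@card_rm t i it); apply: sprod_const => x; rewrite !inE => /andP [xi xt].
by rewrite (negbTE xi) /prof ht.
Qed.

Lemma Erow_pat t q' : pat i = true -> valid k pat i t ->
  Rprod (Erow pat (qq q') i t) = (q' * q0) ^ (k - 1).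
Proof.
move=> pi vt; have [ct it ht] := valid_facts vt.
rewrite /Erow pi.
have -> : (fun j => if j == i then sprod (t :\ i) (fun m => qq q' i * qq q' m) else 1)
   = (fun j => if j == i then (q' * q0) ^ (k - 1) else 1).
  apply: functional_extensionality => j; case: eqP => // _.
  rewrite -ct -(@card_rm t i it); apply: sprod_const => x; rewrite !inE => /andP [xi xt].
  by rewrite /qq /update eqxx (negbTE xi) /prof ht.
exact: Rprod_if_eq.
Qed.

Definition Bf q' := 1 - (q0 * q') * (q0 * q0) ^ (k - 2).
Definition Cf q' := 1 - (q1 * q') * (q1 * q0) ^ (k - 1).
Definition Df q' := 1 - (q0 * q') * (q0 * q0) ^ (k - 1).

Lemma setD1_notin (t : {set 'I_n}) j : j \notin t -> t :\ j = t.
Proof. move=> jt; apply/setP => x; rewrite !inE; case: eqP => //= ->; by rewrite (negbTE jt). Qed.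

Lemma Erow_unpat t q' : pat i = false -> valid k pat i t ->
  Rprod (Erow pat (qq q') i t) =
  (q' * q0) ^ (k - 1) * (Bf q' ^ (k - 1) * (Cf q' ^ #|[set j | pat j]| *
     Df q' ^ #|[set j | (j \notin t) && ~~ pat j]|)).
Proof.
move=> pi vt; have [ct it ht] := valid_facts vt.
have cti : #|t :\ i| = (k - 1)%N by rewrite card_rm // ct.
have qqi : qq q' i = q' by rewrite /qq /update eqxx.
have qqt : forall m, m \in t -> m != i -> qq q' m = q0.
  by move=> m mt mi; rewrite /qq /update (negbTE mi) /prof ht.
transitivity (Rprod (fun j => (if j == i then (q' * q0) ^ (k - 1) else 1) *
   ((if j \in t :\ i then Bf q' else 1) * ((if j \in [set j | pat j] then Cf q' else 1) *
    (if j \in [set j | (j \notin t) && ~~ pat j] then Df q' else 1))))).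
  apply: eq_bigr => j _; rewrite /Erow.
  case: eqP => [->|/eqP ji].
    rewrite !inE eqxx pi it /= !Rmult_1_r.
    rewrite -cti; apply: sprod_const => x; rewrite !inE => /andP [xi xt].
    by rewrite qqi qqt.
  rewrite pi Rmult_1_l !inE ji /=.
  case: (boolP (j \in t)) => jt /=.
    rewrite ht // Rmult_1_r Rmult_1_r /Bf.
    have itj : i \in t :\ j by rewrite !inE eq_sym ji.
    rewrite (sprod_split _ itj) qqi qqt //.
    have cjt : #|(t :\ j) :\ i| = (k - 2)%N.
      by rewrite card_rm // card_rm // ct -subnDA.
    congr (1 - _ * _); rewrite -cjt.
    apply: sprod_const => x; rewrite !inE => /andP [xi /andP [xj xt]].
    by rewrite qqt.
  rewrite Rmult_1_l setD1_notin // (sprod_split _ it) qqi.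
  have qqj : qq q' j = prof pat q1 q0 j by rewrite /qq /update (negbTE ji).
  have -> : sprod (t :\ i) (fun m => qq q' j * qq q' m) = (qq q' j * q0) ^ (k - 1).
    rewrite -cti; apply: sprod_const => x; rewrite !inE => /andP [xi xt].
    by rewrite (qqt x).
  rewrite qqj /prof /Cf /Df; case: (pat j) => /=; lra.
rewrite -!Rprod_mul Rprod_if_eq !Rprod_set cti //.
Qed.

Lemma card_M t : pat i = false -> valid k pat i t ->
  #|[set j | (j \notin t) && ~~ pat j]| = (n - k - #|[set j | pat j]|)%N.
Proof.
move=> pi vt; have [ct it ht] := valid_facts vt.
have -> : [set j | (j \notin t) && ~~ pat j] = ~: (t :|: [set j | pat j]).
  by apply/setP => j; rewrite !inE negb_or.
have h := cardsC (t :|: [set j | pat j]); rewrite card_ord in h.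
have e : #|~: (t :|: [set j | pat j])| = (n - #|t :|: [set j | pat j]|)%N.
  by rewrite -[X in (X - _)%N]h addKn.
rewrite e cardsU ct.
have -> : t :&: [set j | pat j] = set0.
  apply/setP => j; rewrite !inE; apply/andP => -[jt pj].
  case: (eqVneq j i) => [ej|ji]; first by move: pj; rewrite ej pi.
  by move: pj; rewrite ht.
by rewrite cards0 subn0 subnDA.
Qed.

Lemma payoff_unpat (c : R -> R) p' q' : pat i = false ->
  payoff k c pat (pp p') (qq q') i =
  INR #|[set t | valid k pat i t]| *
   (p' * p0 ^ (k - 1) * ((q' * q0) ^ (k - 1) * (Bf q' ^ (k - 1) *
     (Cf q' ^ #|[set j | pat j]| * Df q' ^ (n - k - #|[set j | pat j]|))))) - c p'.
Proof.
move=> pi; rewrite /payoff exp_count.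
have -> : pp p' i = p' by rewrite /pp /update eqxx.
congr (_ - _); apply: Rsum_valid2 => t vt.
by rewrite sprod_t_p // Erow_unpat // card_M.
Qed.

Lemma payoff_pat (c : R -> R) p' q' : pat i = true ->
  payoff k c pat (pp p') (qq q') i =
  INR #|[set t | valid k pat i t]| * (p' * p0 ^ (k - 1) * (q' * q0) ^ (k - 1)) - c p'.
Proof.
move=> pi; rewrite /payoff exp_count.
have -> : pp p' i = p' by rewrite /pp /update eqxx.
congr (_ - _); apply: Rsum_valid2 => t vt.
by rewrite sprod_t_p_pat // Erow_pat.
Qed.

End Sym.


Lemma pow_pred_div (y : R) (m : nat) : y <> 0 ->
  INR m * y ^ Init.Nat.pred m = INR m * y ^ m / y.
Proof.
move=> hy; case: m => [|m] /=; first by rewrite Rmult_0_l /Rdiv Rmult_0_l.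
field; auto.
Qed.

Definition hfun (K P M : nat) (a b c : R) (q : R) : R :=
  q ^ K * (1 - q * a) ^ P * (1 - q * b) ^ M * (1 - q * c) ^ K.

Lemma hfun_pos K P M a b c x : 0 < x -> 0 < 1 - x * a -> 0 < 1 - x * b -> 0 < 1 - x * c ->
  0 < hfun K P M a b c x.
Proof.
move=> *; rewrite /hfun; repeat apply: Rmult_lt_0_compat; by apply: pow_lt.
Qed.

Lemma foc (K P M : nat) (a b c x : R) : 0 < x < 1 -> 0 < 1 - x * a -> 0 < 1 - x * b ->
  0 < 1 - x * c ->
  (forall q, 0 < q < 1 -> hfun K P M a b c q <= hfun K P M a b c x) ->
  INR K / x = INR P * a / (1 - x * a) + INR M * b / (1 - x * b) + INR K * c / (1 - x * c).
Proof.
move=> [x0 x1] ha hb hc hmax.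
set D := hfun K P M a b c x * (INR K / x - INR P * a / (1 - x * a) - INR M * b / (1 - x * b)
   - INR K * c / (1 - x * c)).
have hd : is_derive (hfun K P M a b c) x D.
  rewrite /hfun; auto_derive; first by [].
  have e1 : 1 + - (x * a) = 1 - x * a by ring.
  have e2 : 1 + - (x * b) = 1 - x * b by ring.
  have e3 : 1 + - (x * c) = 1 - x * c by ring.
  rewrite e1 e2 e3.
  rewrite (@pow_pred_div (x) K); last lra.
  rewrite (@pow_pred_div (1 - x * a) P); last lra.
  rewrite (@pow_pred_div (1 - x * b) M); last lra.
  rewrite (@pow_pred_div (1 - x * c) K); last lra.
  rewrite /D /hfun; field; repeat split; lra.
have hd' := proj1 (is_derive_Reals _ _ _) hd.
have pr : derivable_pt (hfun K P M a b c) x by exists D.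
have h0 := deriv_maximum (hfun K P M a b c) 0 1 x pr x0 x1
  (fun q q0 q1 => hmax q (conj q0 q1)).
have hD : D = 0.
  by rewrite -h0; symmetry; apply: derive_pt_eq_0.
have hp := hfun_pos K P M x0 ha hb hc.
have : INR K / x - INR P * a / (1 - x * a) - INR M * b / (1 - x * b)
   - INR K * c / (1 - x * c) = 0.
  apply: (Rmult_eq_reg_l (hfun K P M a b c x)); last lra.
  by rewrite Rmult_0_r.
lra.
Qed.

Lemma bounds (K P M n u v : R) : 0 <= K -> 0 < P -> 0 <= M <= n -> 0 < u < 1 ->
  0 <= v <= u ->
  K = P * u / (1 - u) + M * (u * u) / (1 - u * u) + K * v / (1 - v) ->
  K - 2 * K * u - n * (u * u) <= P * u <= K.
Proof.
move=> K0 P0 [M0 Mn] [u0 u1] [v0 vu] e.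
have h1u : 0 < 1 - u by lra.
have huu : 0 < 1 - u * u by nra.
have h1v : 0 < 1 - v by lra.
have t1 : P * u <= P * u / (1 - u).
  apply: (Rmult_le_reg_r (1 - u)) => //.
  have -> : P * u / (1 - u) * (1 - u) = P * u by field; lra.
  nra.
have t2 : 0 <= M * (u * u) / (1 - u * u).
  apply: Rmult_le_pos; [nra|apply: Rlt_le; apply: Rinv_0_lt_compat; lra].
have t3 : 0 <= K * v / (1 - v).
  apply: Rmult_le_pos; [nra|apply: Rlt_le; apply: Rinv_0_lt_compat; lra].
split; last lra.
have t2' : M * (u * u) / (1 - u * u) <= n * (u * u) / (1 - u).
  apply: (Rmult_le_reg_r ((1 - u * u) * (1 - u))); first nra.
  have -> : M * (u * u) / (1 - u * u) * ((1 - u * u) * (1 - u)) = M * (u * u) * (1 - u).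
    by field; lra.
  have -> : n * (u * u) / (1 - u) * ((1 - u * u) * (1 - u)) = n * (u * u) * (1 - u * u).
    by field; lra.
  have hA : M * (u * u) <= n * (u * u) by nra.
  have hA0 : 0 <= M * (u * u) by nra.
  have hB : 0 <= n * (u * u) by nra.
  have hu2 : 1 - u <= 1 - u * u by nra.
  apply: Rle_trans (Rmult_le_compat_r (1 - u) _ _ (Rlt_le _ _ h1u) hA) _.
  exact: Rmult_le_compat_l.
have t3' : K * v / (1 - v) <= K * u / (1 - u).
  apply: (Rmult_le_reg_r ((1 - v) * (1 - u))); first nra.
  have -> : K * v / (1 - v) * ((1 - v) * (1 - u)) = K * v * (1 - u) by field; lra.
  have -> : K * u / (1 - u) * ((1 - v) * (1 - u)) = K * u * (1 - v) by field; lra.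
  nra.
have : K <= (P * u + n * (u * u) + K * u) / (1 - u).
  have -> : (P * u + n * (u * u) + K * u) / (1 - u) =
     P * u / (1 - u) + n * (u * u) / (1 - u) + K * u / (1 - u) by field; lra.
  lra.
move=> hK.
have : K * (1 - u) <= P * u + n * (u * u) + K * u.
  have := Rmult_le_compat_r (1 - u) _ _ (Rlt_le _ _ h1u) hK.
  by have -> : (P * u + n * (u * u) + K * u) / (1 - u) * (1 - u) = P * u + n * (u * u) + K * u
    by field; lra.
lra.
Qed.

Lemma Rpower_cont_seq (z : nat -> R) (l y : R) : 0 < l -> Un_cv z l ->
  Un_cv (fun j => Rpower (z j) y) (Rpower l y).
Proof.
move=> l0 hz.
apply: (continuity_seq (fun x => Rpower x y)) => //.
apply: derivable_continuous_pt.
exists (y * Rpower l (y - 1)); exact: derivable_pt_lim_power.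
Qed.


Lemma extract (A w p0 q0 : R) (G : R -> R) (c : R -> R) :
  0 <= A -> 0 < w -> 0 < p0 < 1 -> c 0 < c p0 -> c 0 = 0 -> 0 <= q0 <= 1 ->
  (forall p' q', admissible p' q' -> A * (p' * w * G q') - c p' <= A * (p0 * w * G q0) - c p0) ->
  0 < A /\ 0 < G q0 /\ forall q', 0 <= q' <= 1 -> G q' <= G q0.
Proof.
move=> A0 w0 [p00 p01] cp c0 hq h.
have h1 := h 0 q0 (conj (conj (Rle_refl 0) Rlt_0_1) hq).
rewrite c0 in h1 cp.
have hpos : 0 < A * (p0 * w * G q0) by nra.
have Apos : 0 < A.
  case: (Rle_lt_or_eq_dec _ _ A0) => // e; rewrite -e in hpos; lra.
have Gpos : 0 < G q0.
  have : 0 < p0 * w * G q0.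
    apply: (Rmult_lt_reg_l A) => //; lra.
  have : 0 < p0 * w by nra.
  move=> h2 h3.
  case: (Rlt_le_dec 0 (G q0)) => // hg.
  have : p0 * w * G q0 <= 0.
    have := Rmult_le_compat_l (p0 * w) _ _ (Rlt_le _ _ h2) hg; lra.
  lra.
split => //; split => // q' hq'.
have h2 := h p0 q' (conj (conj (Rlt_le _ _ p00) p01) hq').
have : A * (p0 * w) * G q' <= A * (p0 * w) * G q0.
  have -> : A * (p0 * w) * G q' = A * (p0 * w * G q') by ring.
  have -> : A * (p0 * w) * G q0 = A * (p0 * w * G q0) by ring.
  lra.
move=> h3; apply: (Rmult_le_reg_l (A * (p0 * w))) => //.
apply: Rmult_lt_0_compat => //; nra.
Qed.

Lemma update_eq n (pat : 'I_n -> bool) (a1 a0 : R) (i : 'I_n) x :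
  prof pat a1 a0 i = x -> update (prof pat a1 a0) i x = prof pat a1 a0.
Proof.
move=> <-; apply: functional_extensionality => j; rewrite /update.
by case: eqP => // ->.
Qed.

Lemma pow_lt1 (x : R) (m : nat) : 0 <= x < 1 -> x ^ m.+1 < 1.
Proof. move=> hx; exact: (proj2 (pow_lt_1_compat x m.+1 hx (Nat.lt_0_succ _))). Qed.

Lemma pow_le1 (x : R) (m : nat) : 0 <= x <= 1 -> x ^ m <= 1.
Proof. move=> hx; rewrite -(pow1 m); exact: pow_incr. Qed.

Lemma G_hfun (K P M : nat) (q0 q' : R) :
  (q' * q0) ^ (K.+2 - 1) * (Bf K.+2 q0 q' ^ (K.+2 - 1) * (Cf K.+2 1 q0 q' ^ P * Df K.+2 q0 q' ^ M)) =
  q0 ^ K.+1 * hfun K.+1 P M (q0 ^ K.+1) (q0 * (q0 * q0) ^ K.+1) (q0 * (q0 * q0) ^ K) q'.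
Proof.
rewrite /Bf /Cf /Df /hfun.
have -> : (K.+2 - 2 = K)%N by rewrite !subSS subn0.
have -> : (K.+2 - 1 = K.+1)%N by rewrite subSS subn0.
rewrite !Rmult_1_l.
have -> : 1 - q0 * q' * (q0 * q0) ^ K = 1 - q' * (q0 * (q0 * q0) ^ K) by ring.
have -> : 1 - q0 * q' * (q0 * q0) ^ K.+1 = 1 - q' * (q0 * (q0 * q0) ^ K.+1) by ring.
rewrite Rpow_mult_distr; ring.
Qed.

Lemma eq_facts (K n : nat) (c : R -> R) (pat : 'I_n -> bool) (p1 q1 p0 q0 : R) :
  (0 < K)%N -> cost_function c -> (0 < #|[set j | pat j]|)%N -> (#|[set j | pat j]| < n)%N ->
  sym_investment_eq K.+2 c pat p1 q1 p0 q0 ->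
  0 < q0 /\ 0 < q0 ^ K.+2 < 1 /\ 0 <= q0 ^ K.+1 * q0 ^ K.+1 <= q0 ^ K.+2 /\
  INR K.+1 = INR #|[set j | pat j]| * q0 ^ K.+2 / (1 - q0 ^ K.+2) +
    INR (n - K.+2 - #|[set j | pat j]|) * (q0 ^ K.+2 * q0 ^ K.+2) / (1 - q0 ^ K.+2 * q0 ^ K.+2) +
    INR K.+1 * (q0 ^ K.+1 * q0 ^ K.+1) / (1 - q0 ^ K.+1 * q0 ^ K.+1).
Proof.
move=> K0 hc hP0 hPn [hpos [hadm hnash]].
have [_ [c0 [cinc _]]] := hc.
have [i0 pi0] : exists i, pat i = false.
  case: (pickP (fun i => ~~ pat i)) => [i /negbTE pi|h]; first by exists i.
  have : [set j | pat j] = setT.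
    by apply/setP => j; rewrite !inE; move: (h j) => /= /negbFE ->.
  by move=> e; move: hPn; rewrite e cardsT card_ord ltnn.
have [i1 pi1] : exists i, pat i = true.
  by case/card_gt0P: hP0 => j; rewrite inE => pj; exists j.
have e1 : (K.+2 - 1 = K.+1)%N by rewrite subSS subn0.
have [[p10 p11] [q10 q11]] := hadm i1; rewrite /= pi1 in p10 p11 q10 q11.
have [[p00 p01] [q00 q01]] := hadm i0; rewrite /= pi0 in p00 p01 q00 q01.
have hp1 : 0 < p1 by move: (hpos i1); rewrite pi1.
have hp0 : 0 < p0 by move: (hpos i0); rewrite pi0.
have hN1 : forall p' q', admissible p' q' ->
    INR #|[set t | valid K.+2 pat i1 t]| * (p' * p0 ^ K.+1 * (q' * q0) ^ K.+1) - c p' <=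
    INR #|[set t | valid K.+2 pat i1 t]| * (p1 * p0 ^ K.+1 * (q1 * q0) ^ K.+1) - c p1.
  move=> p' q' had.
  have := hnash i1 p' q' had.
  have -> : payoff K.+2 c pat (fun i => if pat i then p1 else p0) (fun i => if pat i then q1 else q0) i1
     = payoff K.+2 c pat (update (prof pat p1 p0) i1 p1) (update (prof pat q1 q0) i1 q1) i1.
    by rewrite !update_eq // /prof pi1.
  by rewrite (payoff_pat _ p1 q1 p0 q0 c p' q' pi1) (payoff_pat _ p1 q1 p0 q0 c p1 q1 pi1) e1.
have [_ [Gp1 Gp2]] := @extract (INR #|[set t | valid K.+2 pat i1 t]|) (p0 ^ K.+1) p1 q1
   (fun q' => (q' * q0) ^ K.+1) c (pos_INR _) (pow_lt _ _ hp0) (conj hp1 p11)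
   (cinc 0 p1 (Rle_refl 0) hp1 p11) c0 (conj q10 q11) hN1.
have q0pos : 0 < q0.
  case: (Rle_lt_or_eq_dec _ _ q00) => // e; rewrite -e Rmult_0_r (pow_i _ (Nat.lt_0_succ K)) in Gp1; lra.
have q1eq : q1 = 1.
  have := Gp2 1 (conj Rle_0_1 (Rle_refl 1)).
  rewrite !Rpow_mult_distr pow1 => h.
  have hq : 1 <= q1 ^ K.+1.
    apply: (Rmult_le_reg_r (q0 ^ K.+1)); first exact: pow_lt.
    lra.
  case: (Rle_lt_or_eq_dec _ _ q11) => // hl.
  have := pow_lt1 K (conj q10 hl); lra.
subst q1.
set P := #|[set j | pat j]|.
set M := (n - K.+2 - P)%N.
set G := fun q' => (q' * q0) ^ (K.+2 - 1) * (Bf K.+2 q0 q' ^ (K.+2 - 1) *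
   (Cf K.+2 1 q0 q' ^ P * Df K.+2 q0 q' ^ M)).
have hN0 : forall p' q', admissible p' q' ->
    INR #|[set t | valid K.+2 pat i0 t]| * (p' * p0 ^ K.+1 * G q') - c p' <=
    INR #|[set t | valid K.+2 pat i0 t]| * (p0 * p0 ^ K.+1 * G q0) - c p0.
  move=> p' q' had.
  have := hnash i0 p' q' had.
  have -> : payoff K.+2 c pat (fun i => if pat i then p1 else p0) (fun i => if pat i then 1 else q0) i0
     = payoff K.+2 c pat (update (prof pat p1 p0) i0 p0) (update (prof pat 1 q0) i0 q0) i0.
    by rewrite !update_eq // /prof pi0.
  rewrite (payoff_unpat _ p1 1 p0 q0 c p' q' pi0) (payoff_unpat _ p1 1 p0 q0 c p0 q0 pi0).
  by rewrite /G e1.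
have [_ [G1 G2]] := @extract (INR #|[set t | valid K.+2 pat i0 t]|) (p0 ^ K.+1) p0 q0
   G c (pos_INR _) (pow_lt _ _ hp0) (conj hp0 p01)
   (cinc 0 p0 (Rle_refl 0) hp0 p01) c0 (conj q00 q01) hN0.
pose a := q0 ^ K.+1.
pose b := q0 * (q0 * q0) ^ K.+1.
pose cc := q0 * (q0 * q0) ^ K.
have hG : forall q', G q' = q0 ^ K.+1 * hfun K.+1 P M a b cc q' by move=> q'; rewrite /G G_hfun.
have hq0K : 0 < q0 ^ K.+1 by apply: pow_lt.
have q0lt : q0 < 1.
  case: (Rle_lt_or_eq_dec _ _ q01) => // e.
  move: G1; rewrite hG /hfun /a e pow1.
  have -> : 1 - 1 * 1 = 0 by ring.
  have hP' : (0 < P)%coq_nat by apply/ltP.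
  rewrite (pow_i _ hP') Rmult_0_r !Rmult_0_l Rmult_0_r; lra.
have hu : q0 * a = q0 ^ K.+2 by [].
have hb : q0 * b = q0 ^ K.+2 * q0 ^ K.+2.
  rewrite /b -Rmult_assoc -Rpow_mult_distr; by [].
have hc' : q0 * cc = q0 ^ K.+1 * q0 ^ K.+1.
  rewrite /cc -Rmult_assoc -Rpow_mult_distr; by [].
have u1 : q0 ^ K.+2 < 1 by apply: pow_lt1; lra.
have u0 : 0 < q0 ^ K.+2 by apply: pow_lt.
have vle : q0 ^ K.+1 <= q0.
  have := pow_le1 K (conj (Rlt_le _ _ q0pos) q01).
  change (q0 ^ K.+1) with (q0 * q0 ^ K); nra.
have v0 : 0 <= q0 ^ K.+1 * q0 ^ K.+1 by apply: Rmult_le_pos; lra.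
have vu : q0 ^ K.+1 * q0 ^ K.+1 <= q0 ^ K.+2.
  change (q0 ^ K.+2) with (q0 * q0 ^ K.+1); nra.
have uu1 : q0 ^ K.+2 * q0 ^ K.+2 < 1 by nra.
have hmax : forall q, 0 < q < 1 -> hfun K.+1 P M a b cc q <= hfun K.+1 P M a b cc q0.
  move=> q hq; have := G2 q (conj (Rlt_le _ _ (proj1 hq)) (Rlt_le _ _ (proj2 hq))).
  rewrite !hG => h.
  by apply: (Rmult_le_reg_l (q0 ^ K.+1)).
have E := @foc K.+1 P M a b cc q0 (conj q0pos q0lt) ltac:(rewrite hu; lra)
  ltac:(rewrite hb; lra) ltac:(rewrite hc'; lra) hmax.
split; first exact q0pos.
split; first by split.
split; first by split.
rewrite -hu -hb -hc'.
have eK : INR K.+1 = q0 * (INR K.+1 / q0) by field; lra.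
rewrite {1}eK E.
field; rewrite hu hb hc'; repeat split; lra.
Qed.


Lemma conv_z (Nn : nat -> nat) (z : nat -> R) (L C : R) :
  (forall M : nat, exists j0 : nat, forall j, (j0 <= j)%N -> (M <= Nn j)%N) ->
  (forall j, (1 <= Nn j)%N) -> 0 <= C ->
  (forall j, Rabs (z j - L) <= C / INR (Nn j)) -> Un_cv z L.
Proof.
move=> hN h1 C0 hz eps heps.
have [m hm] := INR_unbounded (C / eps).
have [j0 hj0] := hN m.
exists j0 => j /leP hj.
rewrite /R_dist; apply: Rle_lt_trans (hz j) _.
have hNj := hj0 j hj.
have n0 : 0 < INR (Nn j) by apply: lt_0_INR; apply/ltP; exact: h1.
have : INR m <= INR (Nn j) by apply: le_INR; apply/leP.
move=> hmN.
apply: (Rmult_lt_reg_r (INR (Nn j))) => //.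
have -> : C / INR (Nn j) * INR (Nn j) = C by field; lra.
have : C < eps * INR m.
  have := Rmult_lt_compat_l eps _ _ heps hm.
  have -> : eps * (C / eps) = C by field; lra.
  lra.
nra.
Qed.

Lemma Rpower_prod (n q : R) (k : nat) : 0 < n -> 0 < q -> (0 < k)%N ->
  q * Rpower n (/ INR k) = Rpower (n * q ^ k) (/ INR k).
Proof.
move=> n0 q0 k0.
rewrite -Rpower_mult_distr //; last exact: pow_lt.
rewrite -Rpower_pow // Rpower_mult Rinv_r; last first.
  by apply: not_0_INR; case: k k0.
by rewrite Rpower_1 // Rmult_comm.
Qed.

Theorem mainTheorem17
  (k : nat) (hk : (2 < k)%N)
  (b : R) (hb : (0 < b < 1))
  (c : R -> R) (hc : cost_function c)
  (N : nat -> nat) (hN2 : forall j, (2 <= N j)%N)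
  (hNinf : forall M : nat, exists j0 : nat, forall j, (j0 <= j)%N -> (M <= N j)%N)
  (pat : forall j, 'I_(N j) -> bool)
  (hpat : forall j, INR #|[set i | pat j i]| = (b * INR (N j)))
  (p1 q1 p0 q0 : nat -> R)
  (heq : forall j, sym_investment_eq k c (pat j) (p1 j) (q1 j) (p0 j) (q0 j)) :
  Un_cv (fun j => (q0 j * Rpower (INR (N j)) (/ INR k)))
        (Rpower ((INR k - 1) / b) (/ INR k)).
Proof.
case: k hk heq => [|[|K]] // hk heq.
have K0 : (0 < K)%N by [].
have eK : INR K.+2 - 1 = INR K.+1 by rewrite (S_INR K.+1); lra.
rewrite eK.
set Kr := INR K.+1.
have Kr0 : 0 < Kr by apply: lt_0_INR; apply/ltP.
have hn0 : forall j, 0 < INR (N j).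
  by move=> j; apply: lt_0_INR; apply/ltP; apply: leq_trans (hN2 j).
have facts : forall j,
   0 < q0 j /\ 0 < q0 j ^ K.+2 < 1 /\
   Rabs (INR (N j) * q0 j ^ K.+2 - Kr / b) <= ((2 * Kr * Kr / b + Kr * Kr / (b * b)) / b) / INR (N j).
  move=> j.
  set n := N j.
  set P := #|[set i | pat j i]|.
  have hP0 : (0 < P)%N.
    have : 0 < INR P by rewrite /P hpat; apply: Rmult_lt_0_compat; [lra|exact: hn0].
    by case: (P) => //=; lra.
  have hPn : (P < n)%N.
    have : INR P < INR n by rewrite /P hpat; have := hn0 j; rewrite -/n; nra.
    by move/INR_lt/ltP.
  have [q0pos [[u0 u1] [[v0 vu] E]]] := eq_facts K0 hc hP0 hPn (heq j).
  set u := q0 j ^ K.+2 in u0 u1 vu E *.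
  have hM : 0 <= INR (n - K.+2 - P) <= INR n.
    split; first exact: pos_INR.
    apply: le_INR; apply/leP; apply: leq_trans (leq_subr _ _) (leq_subr _ _).
  have [lo hi] := bounds (Rlt_le _ _ Kr0) (lt_0_INR _ (elimT ltP hP0)) hM (conj u0 u1) (conj v0 vu) E.
  rewrite /P hpat -/n in lo hi.
  have nn0 : 0 < INR n := hn0 j.
  have ub : u <= Kr / (b * INR n).
    apply: (Rmult_le_reg_r (b * INR n)); first nra.
    have -> : Kr / (b * INR n) * (b * INR n) = Kr by field; lra.
    nra.
  split => //; split; first by split.
  have z_ub : INR n * u <= Kr / b.
    apply: (Rmult_le_reg_r b); first lra.
    have -> : Kr / b * b = Kr by field; lra.
    nra.
  have t1 : 2 * Kr * u <= 2 * Kr * Kr / (b * INR n).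
    have -> : 2 * Kr * Kr / (b * INR n) = 2 * Kr * (Kr / (b * INR n)) by field; lra.
    nra.
  have t2 : INR n * (u * u) <= Kr * Kr / (b * b) / INR n.
    have -> : Kr * Kr / (b * b) / INR n = (Kr / b) * (Kr / (b * INR n)) by field; lra.
    have -> : INR n * (u * u) = (INR n * u) * u by ring.
    apply: Rmult_le_compat => //; nra.
  have -> : ((2 * Kr * Kr / b + Kr * Kr / (b * b)) / b) / INR n =
     (2 * Kr * Kr / (b * INR n) + Kr * Kr / (b * b) / INR n) / b by field; lra.
  apply: Rabs_le; split.
  - apply: (Rmult_le_reg_r b); first lra.
    have -> : (INR n * u - Kr / b) * b = b * INR n * u - Kr by field; lra.
    have -> : - ((2 * Kr * Kr / (b * INR n) + Kr * Kr / (b * b) / INR n) / b) * b =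
       - (2 * Kr * Kr / (b * INR n) + Kr * Kr / (b * b) / INR n) by field; lra.
    nra.
  - have : 0 <= (2 * Kr * Kr / (b * INR n) + Kr * Kr / (b * b) / INR n) / b.
      apply: Rmult_le_pos; last (apply: Rlt_le; apply: Rinv_0_lt_compat; lra).
      apply: Rplus_le_le_0_compat.
        apply: Rmult_le_pos; [nra|apply: Rlt_le; apply: Rinv_0_lt_compat; nra].
      apply: Rmult_le_pos; [|apply: Rlt_le; apply: Rinv_0_lt_compat; nra].
      apply: Rmult_le_pos; [nra|apply: Rlt_le; apply: Rinv_0_lt_compat; nra].
    lra.
have hz : Un_cv (fun j => INR (N j) * q0 j ^ K.+2) (Kr / b).
  apply: (conv_z (C := (2 * Kr * Kr / b + Kr * Kr / (b * b)) / b) hNinf) => [j||j].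
  - exact: leq_trans (hN2 j).
  - apply: Rmult_le_pos; last (apply: Rlt_le; apply: Rinv_0_lt_compat; lra).
    apply: Rplus_le_le_0_compat.
      apply: Rmult_le_pos; [nra|apply: Rlt_le; apply: Rinv_0_lt_compat; nra].
    apply: Rmult_le_pos; [nra|apply: Rlt_le; apply: Rinv_0_lt_compat; nra].
  - by case: (facts j) => _ [_ ].
have hr := Rpower_cont_seq (/ INR K.+2) (Rdiv_lt_0_compat _ _ Kr0 (proj1 hb)) hz.
move=> eps heps; case: (hr eps heps) => j0 hj0; exists j0 => j hj.
have [q0pos _] := facts j.
rewrite (Rpower_prod (hn0 j) q0pos) //.
exact: hj0.
Qed.
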